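(* Let $a\in\mathbb R$, $b\in[a,\infty)$, $d,L\in\mathbb N$, $l=(l_0,l_1,\dots,l_L)\in\mathbb N^{L+1}$ satisfy $d\ge\sum_{k=1}^Ll_k(l_{k-1}+1)$. Then for all $\theta,\vartheta\in\mathbb R^d$, $$\sup_{x\in[a,b]^{l_0}}\|\mathscr N^{\theta,l}_{-\infty,\infty}(x)-\mathscr N^{\vartheta,l}_{-\infty,\infty}(x)\|_\infty\le\max\{1,|a|,|b|\}\,\|\theta-\vartheta\|_\infty\Bigl[\prod_{m=0}^{L-1}(l_m+1)\Bigr]\Bigl[\sum_{n=0}^{L-1}\max\{1,\|\theta\|_\infty^n\}\,\|\vartheta\|_\infty^{L-1-n}\Bigr]$$ $$\le L\max\{1,|a|,|b|\}\bigl(\max\{1,\|\theta\|_\infty,\|\vartheta\|_\infty\}\bigr)^{L-1}\Bigl[\prod_{m=0}^{L-1}(l_m+1)\Bigr]\|\theta-\vartheta\|_\infty\le L\max\{1,|a|,|b|\}(\|l\|_\infty+1)^L\bigl(\max\{1,\|\theta\|_\infty,\|\vartheta\|_\infty\}\bigr)^{L-1}\|\theta-\vartheta\|_\infty.$$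
   Context: $\|\cdot\|_\infty$ denotes the maximum norm $\|\theta\|_\infty=\max_i|\theta_i|$ on any $\mathbb R^n$ (also applied to $l$). For $r,s\in\mathbb N$, $k\in\mathbb N_0$, $\theta\in\mathbb R^d$ with $d\ge k+rs+r$, $\mathcal A^{\theta,k}_{r,s}\colon\mathbb R^s\to\mathbb R^r$ has $i$-th component $x\mapsto\sum_{j=1}^s\theta_{k+(i-1)s+j}x_j+\theta_{k+rs+i}$. $\mathfrak R_n$ applies $y\mapsto\max\{y,0\}$ componentwise on $\mathbb R^n$. With $s_k=\sum_{j=1}^kl_j(l_{j-1}+1)$, the unclipped ReLU network is $\mathscr N^{\theta,l}_{-\infty,\infty}=\mathcal A^{\theta,s_{L-1}}_{l_L,l_{L-1}}\circ\mathfrak R_{l_{L-1}}\circ\mathcal A^{\theta,s_{L-2}}_{l_{L-1},l_{L-2}}\circ\cdots\circ\mathfrak R_{l_1}\circ\mathcal A^{\theta,0}_{l_1,l_0}\colon\mathbb R^{l_0}\to\mathbb R^{l_L}$ (for $L=1$ just $\mathcal A^{\theta,0}_{l_1,l_0}$). Convention $0^0=1$. *)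

(* Defs.v *)
From HB Require Import structures.
From mathcomp Require Import all_boot all_order all_algebra.
From mathcomp Require Import classical_sets boolp reals.
Set Implicit Arguments. Unset Strict Implicit. Unset Printing Implicit Defensive.
Import Order.TTheory GRing.Theory Num.Theory.
Local Open Scope ring_scope.

Section DNN.
Variable R : realType.

(* A finite vector viewed as a function on nat (padded by 0 outside the
   index range).  Used to read parameters theta_{n+1} = vec_at theta n
   (0-based) and the input coordinates. *)
Definition vec_at (n : nat) (v : 'rV[R]_n) (k : nat) : R :=
  if insub k is Some i then v 0 i else 0.

Definition maxnorm (n : nat) (v : 'rV[R]_n) : R :=
  \big[Num.max/0]_(i < n) `|v 0 i|.

(* affine map A^{th,k}_{r,s}, 0-based: component i (i < r) is
   sum_{j<s} th_(k + i*s + j) x_j + th_(k + r*s + i) *)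
Definition affine (th : nat -> R) (k r s : nat) (x : nat -> R) : nat -> R :=
  fun i => \sum_(j < s) th (k + i * s + j)%N * x j + th (k + r * s + i)%N.

Definition relu (x : nat -> R) : nat -> R := fun i => Num.max (x i) 0.

Definition sidx (l : seq nat) (k : nat) : nat :=
  \sum_(1 <= j < k.+1) nth 0 l j * (nth 0 l j.-1 + 1).

Fixpoint layer_out (th : nat -> R) (l : seq nat) (m : nat) (x : nat -> R)
  : nat -> R :=
  match m with
  | 0 => x
  | m'.+1 => affine th (sidx l m') (nth 0 l m'.+1) (nth 0 l m')
               (if m' is 0 then x else relu (layer_out th l m' x))
  end.

(* realization N^{theta,l}_{-oo,oo}(x) of the unclipped ReLU network with
   architecture l = (l_0,...,l_L); as a function of the output index *)
Definition realization (d L : nat) (l : (L.+1).-tuple nat) (theta : 'rV[R]_d)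
  (x : 'rV[R]_(nth 0 l 0)) : nat -> R :=
  layer_out (vec_at theta) l L (vec_at x).

End DNN.

Arguments realization {R d L} l theta x _.

(* Main.v *)
Require Import Defs.
From HB Require Import structures.
From mathcomp Require Import all_boot all_order all_algebra.
From mathcomp Require Import classical_sets boolp reals.
From mathcomp Require Import ring lra zify.
Import Order.TTheory GRing.Theory Num.Theory.
Local Open Scope ring_scope.
Local Open Scope classical_set_scope.

Section Helpers.
Variable R : realType.

Lemma relu_bounds (y1 y2 : R) :
  `|Num.max y1 0| <= `|y1| /\ `|Num.max y1 0 - Num.max y2 0| <= `|y1 - y2|.
Proof.
have [h1|h1] := leP 0 y1; have [h2|h2] := leP 0 y2; rewrite ?subr0 ?sub0r ?normrN ?subrr ?normr0; try split => //; try exact: normr_ge0. 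
- rewrite (ger0_norm h1) ger0_norm; lra.
- rewrite (ger0_norm h2) ler0_norm; lra.
Qed.

Lemma max1_step (nt : R) k : 0 <= nt ->
  nt * Num.max 1 (nt ^+ k) <= Num.max 1 (nt ^+ k.+1).
Proof.
move=> h0; have [h|h] := leP nt 1.
- have hk : nt ^+ k <= 1 by apply: exprn_ile1.
  rewrite (max_l hk) mulr1 le_max h //.
- have hk : 1 <= nt ^+ k by apply: exprn_ege1; exact: ltW.
  rewrite (max_r hk) exprS le_max lexx orbT //.
Qed.

Variables (th tv : nat -> R) (nt nv nd : R).
Hypothesis hth : forall k, `|th k| <= nt.
Hypothesis htv : forall k, `|tv k| <= nv.
Hypothesis hd : forall k, `|th k - tv k| <= nd.

Lemma nt_ge0 : 0 <= nt. Proof. exact: le_trans (normr_ge0 _) (hth 0). Qed.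
Lemma nv_ge0 : 0 <= nv. Proof. exact: le_trans (normr_ge0 _) (htv 0). Qed.
Lemma nd_ge0 : 0 <= nd. Proof. exact: le_trans (normr_ge0 _) (hd 0). Qed.

Lemma affine_bounds k r s (z1 z2 : nat -> R) Dz Ez i :
  1 <= Dz -> 0 <= Ez ->
  (forall j, `|z1 j| <= Dz) -> (forall j, `|z1 j - z2 j| <= Ez) ->
  `|affine th k r s z1 i| <= (s + 1)%:R * nt * Dz /\
  `|affine th k r s z1 i - affine tv k r s z2 i| <= (s + 1)%:R * (nd * Dz + nv * Ez).
Proof.
move=> hD hE hz1 hz12; rewrite /affine; split.
- apply: le_trans (ler_normD _ _) _.
  apply: (@le_trans _ _ (s%:R * (nt * Dz) + nt)).
    apply: lerD; last exact: hth.
    apply: le_trans (ler_norm_sum _ _ _) _.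
    have -> : s%:R * (nt * Dz) = \sum_(j < s) (nt * Dz).
      by rewrite sumr_const card_ord mulr_natl.
    apply: ler_sum => j _; rewrite normrM; apply: ler_pM => //.
  have := nt_ge0; rewrite natrD; nra.
- have -> : \sum_(j < s) th (k + i * s + j)%N * z1 j + th (k + r * s + i)%N -
     (\sum_(j < s) tv (k + i * s + j)%N * z2 j + tv (k + r * s + i)%N) =
     \sum_(j < s) ((th (k + i * s + j)%N - tv (k + i * s + j)%N) * z1 j
          + tv (k + i * s + j)%N * (z1 j - z2 j))
     + (th (k + r * s + i)%N - tv (k + r * s + i)%N).
    symmetry; rewrite (eq_bigr (fun j : 'I_s => th (k + i * s + j)%N * z1 j - tv (k + i * s + j)%N * z2 j)).
      by rewrite sumrB; ring.
    by move=> j _; ring.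
  apply: le_trans (ler_normD _ _) _.
  apply: (@le_trans _ _ (s%:R * (nd * Dz + nv * Ez) + nd)).
    apply: lerD; last exact: hd.
    apply: le_trans (ler_norm_sum _ _ _) _.
    have -> : s%:R * (nd * Dz + nv * Ez) = \sum_(j < s) (nd * Dz + nv * Ez).
      by rewrite sumr_const card_ord mulr_natl.
    apply: ler_sum => j _; apply: le_trans (ler_normD _ _) _.
    by apply: lerD; rewrite normrM; apply: ler_pM.
  have := nd_ge0; have := nv_ge0; rewrite natrD; nra.
Qed.

Variables (l : seq nat) (x : nat -> R) (C : R).
Hypothesis hC : 1 <= C.
Hypothesis hx : forall j, `|x j| <= C.

Definition Pk k : R := \prod_(m < k) ((nth 0%N l m + 1)%N)%:R.
Definition Dk k : R := C * Pk k * Num.max 1 (nt ^+ k).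
Definition Ek k : R := C * nd * Pk k *
  (\sum_(n < k) Num.max 1 (nt ^+ n) * nv ^+ (k - 1 - n)).

Lemma Pk_ge1 k : 1 <= Pk k.
Proof.
rewrite /Pk; elim/big_ind: _ => //.
  move=> u v hu hv; rewrite -[1]mulr1; apply: ler_pM => //.
by move=> m _; rewrite ler1n addn1.
Qed.

Lemma Dk_ge1 k : 1 <= Dk k.
Proof.
rewrite /Dk; have h1 := Pk_ge1 k.
have h2 : 1 <= Num.max 1 (nt ^+ k) by rewrite le_max lexx.
have h3 : 1 <= C * Pk k by rewrite -[1]mulr1; apply: ler_pM.
apply: (@le_trans _ _ (1 * 1)); first by rewrite mulr1.
by apply: ler_pM.
Qed.

Lemma Ek_ge0 k : 0 <= Ek k.
Proof.
rewrite /Ek; apply: mulr_ge0.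
  apply: mulr_ge0; last exact: le_trans ler01 (Pk_ge1 k).
  apply: mulr_ge0; [exact: le_trans ler01 hC| exact: nd_ge0].
apply: sumr_ge0 => n _; apply: mulr_ge0.
  by rewrite le_max ler01.
by apply: exprn_ge0; exact: nv_ge0.
Qed.

Definition zin (t : nat -> R) k : nat -> R :=
  if k is 0 then x else relu (layer_out t l k x).

Lemma key k : forall i,
  `|layer_out th l k x i| <= Dk k /\
  `|layer_out th l k x i - layer_out tv l k x i| <= Ek k.
Proof.
have hz : forall k, (forall i, `|layer_out th l k x i| <= Dk k /\
  `|layer_out th l k x i - layer_out tv l k x i| <= Ek k) ->
  forall j, `|zin th k j| <= Dk k /\ `|zin th k j - zin tv k j| <= Ek k.
  move=> [|k'] IH j /=.
    split; last by rewrite subrr normr0 Ek_ge0.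
    by apply: le_trans (hx j) _; rewrite /Dk /Pk big_ord0 expr0 mulr1 maxxx mulr1.
  have [h1 h2] := IH j; have [r1 r2] := relu_bounds (layer_out th l k'.+1 x j) (layer_out tv l k'.+1 x j).
  by split; rewrite /relu; [apply: le_trans r1 h1 | apply: le_trans r2 h2].
elim: k => [|k IH] i.
  split; last by rewrite subrr normr0 Ek_ge0.
  by apply: le_trans (hx i) _; rewrite /= /Dk /Pk big_ord0 expr0 mulr1 maxxx mulr1.
have hzk := hz k IH.
have := @affine_bounds (sidx l k) (nth 0%N l k.+1) (nth 0%N l k) (zin th k) (zin tv k)
  (Dk k) (Ek k) i (Dk_ge1 k) (Ek_ge0 k) (fun j => (hzk j).1) (fun j => (hzk j).2).
have -> : layer_out th l k.+1 x = affine th (sidx l k) (nth 0%N l k.+1) (nth 0%N l k) (zin th k).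
  by case: k {IH hzk}.
have -> : layer_out tv l k.+1 x = affine tv (sidx l k) (nth 0%N l k.+1) (nth 0%N l k) (zin tv k).
  by case: k {IH hzk}.
move=> [h1 h2]; split.
- apply: le_trans h1 _; rewrite /Dk /Pk big_ord_recr /=.
  have := @max1_step nt k nt_ge0.
  set p := \prod_(i < k) _; set q := ((nth 0%N l k + 1)%N)%:R.
  have hp : 0 <= p by apply: le_trans ler01 (Pk_ge1 k).
  have hq : 0 <= q by [].
  move=> hm.
  have -> : q * nt * (C * p * Num.max 1 (nt ^+ k)) = (C * p * q) * (nt * Num.max 1 (nt ^+ k)) by ring.
  rewrite [C * (p * q)]mulrA; apply: ler_wpM2l => //; apply: mulr_ge0 => //; apply: mulr_ge0 => //; exact: le_trans ler01 hC.
- apply: le_trans h2 _; rewrite le_eqVlt; apply/orP; left; apply/eqP.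
  rewrite /Ek /Dk /Pk.
  have -> : \sum_(n < k.+1) Num.max 1 (nt ^+ n) * nv ^+ (k.+1 - 1 - n) =
     nv * (\sum_(n < k) Num.max 1 (nt ^+ n) * nv ^+ (k - 1 - n)) + Num.max 1 (nt ^+ k).
    rewrite big_ord_recr /=; congr (_ + _); last first.
      have -> : (k.+1 - 1 - k = 0)%N by lia.
      by rewrite expr0 mulr1.
    rewrite mulr_sumr; apply: eq_bigr => n _.
    have -> : (k.+1 - 1 - n = (k - 1 - n).+1)%N by have := ltn_ord n; lia.
    by rewrite exprS; ring.
  rewrite big_ord_recr /=; ring.
Qed.

End Helpers.

Lemma vec_at_le {R : realType} {n} (v : 'rV[R]_n) k : `|vec_at v k| <= maxnorm v.
Proof.
rewrite /vec_at /maxnorm; case: insubP => [i _ _|_].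
  by rewrite (bigD1 i) //= le_max lexx.
rewrite normr0; elim/big_ind: _ => // u w hu hw; by rewrite le_max hu.
Qed.

Lemma maxnorm_ge0 {R : realType} {n} (v : 'rV[R]_n) : 0 <= maxnorm v.
Proof. exact: le_trans (normr_ge0 _) (vec_at_le v 0). Qed.

Lemma vec_at_diff {R : realType} {n} (v w : 'rV[R]_n) k :
  `|vec_at v k - vec_at w k| <= maxnorm (v - w).
Proof.
have := vec_at_le (v - w) k; rewrite /vec_at.
case: insubP => [i _ _|_]; rewrite ?subrr //; rewrite !mxE => h; exact: h.
Qed.

Theorem theorem2p36 (R : realType) (a b : R) (d L : nat)
  (l : (L.+1).-tuple nat) (theta vartheta : 'rV[R]_d) :
  a <= b -> (0 < L)%N -> (0 < d)%N -> (forall k, k \in l -> (0 < k)%N) ->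
  (\sum_(1 <= k < L.+1) nth 0%N l k * (nth 0%N l k.-1 + 1) <= d)%N ->
  let C := Num.max 1 (Num.max `|a| `|b|) in
  let nt := maxnorm theta in
  let nv := maxnorm vartheta in
  let ndiff := maxnorm (theta - vartheta) in
  let P : R := \prod_(m < L) ((nth 0%N l m + 1)%N)%:R in
  let M := Num.max 1 (Num.max nt nv) in
  let nl := (\max_(k <- l) k)%N in
  sup [set y | exists x : 'rV[R]_(nth 0%N l 0),
         (forall i, a <= x 0 i <= b) /\
         y = \big[Num.max/0]_(i < nth 0%N l L)
               `|realization l theta x i - realization l vartheta x i| ]
    <= C * ndiff * P * (\sum_(n < L) Num.max 1 (nt ^+ n) * nv ^+ (L - 1 - n))
  /\ C * ndiff * P * (\sum_(n < L) Num.max 1 (nt ^+ n) * nv ^+ (L - 1 - n))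
    <= L%:R * C * M ^+ (L - 1) * P * ndiff
  /\ L%:R * C * M ^+ (L - 1) * P * ndiff
    <= L%:R * C * ((nl + 1)%N)%:R ^+ L * M ^+ (L - 1) * ndiff.
Proof.
move=> hab hL hd hpos hsum C nt nv ndiff P M nl.
have hC1 : 1 <= C by rewrite le_max lexx.
have hC0 : 0 <= C by apply: le_trans ler01 hC1.
have hnt : 0 <= nt := maxnorm_ge0 theta.
have hnv : 0 <= nv := maxnorm_ge0 vartheta.
have hnd : 0 <= ndiff := maxnorm_ge0 (theta - vartheta).
have hP1 : 1 <= P by exact: (Pk_ge1 R l L).
have hP0 : 0 <= P by apply: le_trans ler01 hP1.
have hM1 : 1 <= M by rewrite le_max lexx.
have hM0 : 0 <= M by apply: le_trans ler01 hM1.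
split; [|split].
- apply: ge_sup.
    exists (\big[Num.max/0]_(i < nth 0%N l L)
      `|realization l theta (\row_i a) i - realization l vartheta (\row_i a) i|).
    by exists (\row_i a); split => // i; rewrite mxE lexx hab.
  move=> y [x [hx ->]].
  have hxC : forall j, `|vec_at x j| <= C.
    move=> j; rewrite /vec_at; case: insubP => [i _ _|_]; last by rewrite normr0.
    have [h1 h2] := andP (hx i).
    apply: (@le_trans _ _ (Num.max `|a| `|b|)); last by rewrite le_max lexx orbT.
    rewrite ler_norml; apply/andP; split.
      have := ler_norm (- a); rewrite normrN; have := le_max `|a| `|a| `|b|.
      rewrite lexx /=; lra.
    have := ler_norm b; have := le_max `|b| `|a| `|b|; rewrite lexx orbT; lra.
  have hE := fun i => (@key R _ _ _ _ _ (vec_at_le theta) (vec_at_le vartheta) (vec_at_diff theta vartheta) l _ _ hC1 hxC L i).2.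
  have hb0 : 0 <= Ek R nt nv ndiff l C L.
    exact: (@Ek_ge0 R _ _ _ _ _ (vec_at_le vartheta) (vec_at_diff theta vartheta) l _ hC1).
  elim/big_ind: _ => //.
    by move=> u w hu hw; rewrite ge_max hu hw.
  move=> i _; exact: hE.
- have hS : \sum_(n < L) Num.max 1 (nt ^+ n) * nv ^+ (L - 1 - n) <= L%:R * M ^+ (L - 1).
    have -> : L%:R * M ^+ (L - 1) = \sum_(n < L) M ^+ (L - 1).
      by rewrite sumr_const card_ord mulr_natl.
    apply: ler_sum => n _.
    have -> : M ^+ (L - 1) = M ^+ n * M ^+ (L - 1 - n).
      by rewrite -exprD; congr (_ ^+ _); have := ltn_ord n; lia.
    apply: ler_pM.
    + by rewrite le_max ler01.
    + exact: exprn_ge0.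
    + rewrite ge_max exprn_ege1 //=; apply: lerXn2r => //; rewrite ?nnegrE //.
      by rewrite !le_max lexx orbT.
    + apply: lerXn2r => //; rewrite ?nnegrE //.
      by rewrite !le_max lexx !orbT.
  have -> : L%:R * C * M ^+ (L - 1) * P * ndiff = C * ndiff * P * (L%:R * M ^+ (L - 1)) by ring.
  apply: ler_wpM2l => //; by rewrite !mulr_ge0.
- have hQ : P <= ((nl + 1)%N)%:R ^+ L.
    rewrite /P -[X in _ <= X ^+ L]/(((nl + 1)%N)%:R : R).
    have -> : ((nl + 1)%N)%:R ^+ L = \prod_(m < L) (((nl + 1)%N)%:R : R).
      by rewrite prodr_const card_ord.
    apply: ler_prod => m _; rewrite ler0n /= ler_nat leq_add2r.
    apply: (@leq_bigmax_seq _ l xpredT id) => //.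
    apply: mem_nth; rewrite size_tuple; have := ltn_ord m; lia.
  have -> : L%:R * C * M ^+ (L - 1) * P * ndiff = (L%:R * C * M ^+ (L - 1) * ndiff) * P by ring.
  have -> : L%:R * C * ((nl + 1)%N)%:R ^+ L * M ^+ (L - 1) * ndiff
    = (L%:R * C * M ^+ (L - 1) * ndiff) * ((nl + 1)%N)%:R ^+ L by ring.
  apply: ler_wpM2l => //; by rewrite !mulr_ge0 // exprn_ge0.
Qed.
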